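(* Fix $r,\nu,\mu\in\mathbb R$, $\eta>0$, $\sigma>0$, $s_0>0$, $\lambda>0$, $\gamma>0$, and for $T>0$ let $$\rho^*(T)=\frac{\eta T}{W\left(\lambda\gamma s_0\eta^2Te^{(\nu-\frac{\eta^2}{2})T}\right)}\frac{\mu-r}{\sigma},$$ where $W$ is the Lambert function. Then $$\rho^*(T)=\frac{\mu-r}{\sigma}\left(\frac1{\eta s_0\lambda\gamma}+\left(\eta-\frac{\nu-\frac{\eta^2}{2}}{\eta s_0\lambda\gamma}\right)T\right)+T\epsilon(T),\quad\text{with }\lim_{T\to0^+}\epsilon(T)=0.$$ Moreover, if $\nu>\frac{\eta^2}{2}$, then $$\lim_{T\to+\infty}\rho^*(T)=\frac{\mu-r}{\sigma}\frac{\eta}{\nu-\frac{\eta^2}{2}}.$$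
   Context: The Lambert function $W$ is the inverse of the bijection $x\in(-1,+\infty)\mapsto xe^x\in(-1/e,+\infty)$. *)

(* Defs.v *)
From Stdlib Require Import Reals Lra ClassicalEpsilon.
From Coquelicot Require Import Coquelicot.
Open Scope R_scope.

(* The Lambert function W: inverse of the bijection
   x in (-1,+oo) |-> x e^x in (-1/e,+oo).
   For y in the range, LambertW y is the (unique) x > -1 with x * exp x = y;
   outside the range it is an arbitrary junk value chosen by epsilon. *)
Definition LambertW (y : R) : R :=
  epsilon (inhabits 0) (fun x => -1 < x /\ x * exp x = y).

Definition rho_star (r nu mu eta sigma s0 lambda gamma T : R) : R :=
  eta * T / LambertW (lambda * gamma * s0 * eta ^ 2 * T
                        * exp ((nu - eta ^ 2 / 2) * T))
  * ((mu - r) / sigma).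

(* Main.v *)
Require Import Defs.
From Stdlib Require Import Reals Lra ClassicalEpsilon.
From Coquelicot Require Import Coquelicot.
Open Scope R_scope.

Lemma W_spec y : 0 < y -> 0 < LambertW y /\ LambertW y * exp (LambertW y) = y.
Proof.
  intros Hy.
  assert (Hex : exists x, -1 < x /\ x * exp x = y).
  { assert (Hc : continuity (fun x => x * exp x - y)) by reg.
    assert (H1 : 1 + y < exp y) by (apply exp_ineq1; lra).
    destruct (IVT (fun x => x * exp x - y) 0 y Hc Hy) as [z [Hz1 Hz2]].
    - rewrite exp_0; lra.
    - nra.
    - exists z; split; lra. }
  pose proof (epsilon_spec (inhabits 0) (fun x => -1 < x /\ x * exp x = y) Hex) as [H1 H2].
  unfold LambertW. set (w := epsilon _ _) in *.
  split; [|exact H2].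
  pose proof (exp_pos w). nra.
Qed.

Definition gfun (u : R) : R := (exp u - 1 - u) / u.

Lemma gfun_cont : continuous gfun 0.
Proof.
  apply continuity_pt_filterlim.
  intros eps Heps.
  destruct (derivable_pt_lim_exp 0 eps Heps) as [d Hd].
  exists d. split; [apply cond_pos|].
  intros x [[_ Hx0] Hxd].
  unfold R_dist in *. simpl in *. unfold R_dist in *.
  unfold gfun. rewrite exp_0.
  replace ((1 - 1 - 0) / 0) with 0 by (unfold Rdiv; ring).
  replace ((exp x - 1 - x) / x - 0) with ((exp (0 + x) - exp 0) / x - exp 0).
  - apply Hd; auto. rewrite Rminus_0_r in Hxd. exact Hxd.
  - rewrite Rplus_0_l, exp_0. field. auto.
Qed.


Definition Ffun (c0 k a u : R) : R :=
  c0 * ((k * exp (- u) - a) * gfun u + k * (exp (- u) - 1)).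

Lemma Ffun_cont c0 k a : continuous (Ffun c0 k a) 0.
Proof.
  assert (He : continuous (fun u => exp (- u)) 0).
  { apply (@ex_derive_continuous R_AbsRing R_NormedModule). auto_derive. auto. }
  unfold Ffun.
  apply (@continuous_mult R_UniformSpace R_AbsRing (fun _ => c0) (fun u => (k * exp (- u) - a) * gfun u + k * (exp (- u) - 1))).
  apply continuous_const.
  apply (@continuous_plus R_UniformSpace R_AbsRing R_NormedModule (fun u => (k * exp (- u) - a) * gfun u) (fun u => k * (exp (- u) - 1))).
  apply (@continuous_mult R_UniformSpace R_AbsRing (fun u => (k * exp (- u) - a)) gfun).
  apply (@continuous_minus R_UniformSpace R_AbsRing R_NormedModule (fun u => k * exp (- u)) (fun _ => a)).
  apply (@continuous_mult R_UniformSpace R_AbsRing (fun _ => k) (fun u => exp (- u))). apply continuous_const. exact He.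
  apply continuous_const. apply gfun_cont.
  apply (@continuous_mult R_UniformSpace R_AbsRing (fun _ => k) (fun u => exp (- u) - 1)). apply continuous_const.
  apply (@continuous_minus R_UniformSpace R_AbsRing R_NormedModule (fun u => exp (- u)) (fun _ => 1)). exact He. apply continuous_const.
Qed.

Lemma Ffun_0 c0 k a : Ffun c0 k a 0 = 0.
Proof. unfold Ffun, gfun. rewrite Ropp_0, exp_0. unfold Rdiv. ring. Qed.


Lemma key_id (eta s0 lambda gamma c a T w : R) :
  0 < eta -> 0 < s0 -> 0 < lambda -> 0 < gamma -> 0 < T -> 0 < w ->
  w * exp w = lambda * gamma * s0 * eta ^ 2 * T * exp (a * T) ->
  (eta * T / w * c - c * (1 / (eta * s0 * lambda * gamma)
      + (eta - a / (eta * s0 * lambda * gamma)) * T)) / T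
  = Ffun (c / (eta * s0 * lambda * gamma)) (lambda * gamma * s0 * eta ^ 2) a (w - a * T).
Proof.
  intros He Hs Hl Hg HT Hw Hrel.
  set (k := lambda * gamma * s0 * eta ^ 2) in *.
  assert (Hk : 0 < k) by (unfold k; repeat apply Rmult_lt_0_compat; try apply pow_lt; lra).
  pose proof (exp_pos w) as HE. pose proof (exp_pos (a*T)) as HA.
  set (E := exp w) in *. set (A := exp (a * T)) in *.
  assert (Hm : exp (- (w - a * T)) = A / E).
  { replace (- (w - a*T)) with (a * T + - w) by ring. rewrite exp_plus, exp_Ropp. reflexivity. }
  assert (Hp : exp (w - a * T) = E / A).
  { replace (w - a*T) with (w + - (a * T)) by ring. rewrite exp_plus, exp_Ropp. reflexivity. }
  unfold Ffun, gfun. rewrite Hm, Hp.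
  destruct (Req_dec (w - a * T) 0) as [H0|H0].
  - assert (Hwa : w = a * T) by lra.
    assert (HEA : E = A) by (unfold E, A; rewrite Hwa; reflexivity).
    rewrite HEA in Hrel. rewrite Hwa in Hrel.
    assert (Hak : a = k).
    { apply Rmult_eq_reg_r with (T * A). nra. nra. }
    assert (Hz : forall z, z / 0 = 0) by (intro; unfold Rdiv; rewrite Rinv_0; ring).
    rewrite H0, Hz, HEA, Hwa, Hak. unfold k. field. repeat split; lra.
  - assert (Hw' : w = k * T * A / E) by (apply Rmult_eq_reg_r with E; [|lra]; rewrite Hrel; field; lra).
    revert H0. rewrite Hw'. intros H0. unfold k in *. field. repeat split; try lra.
intro Hc; apply H0. replace (lambda * gamma * s0 * eta ^ 2 * T * A / E - a * T) with ((lambda * gamma * s0 * eta ^ 2 * T * A - a * T * E) / E) by (field; lra). rewrite Hc. unfold Rdiv; ring. Qed.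


Lemma ball_R x e y : Rabs (y - x) < e -> ball x e y.
Proof. intros H. exact H. Qed.
Lemma ball_R' x e y : ball x e y -> Rabs (y - x) < e.
Proof. intros H. exact H. Qed.

Lemma exp_mono x y : x <= y -> exp x <= exp y.
Proof. intros H. destruct (Rle_lt_or_eq_dec _ _ H) as [H'|H'].
  left; apply exp_increasing; auto. rewrite H'; lra. Qed.

Lemma u_lim (k a : R) : 0 < k ->
  filterlim (fun T => LambertW (k*T*exp(a*T)) - a*T) (at_right 0) (locally 0).
Proof.
  intros Hk. apply filterlim_locally. intros eps.
  set (M := k * exp (Rabs a) + Rabs a + 1).
  pose proof (exp_pos (Rabs a)). pose proof (Rabs_pos a).
  assert (HM : 0 < M) by (unfold M; nra).
  assert (Hd : 0 < Rmin 1 (eps / M)).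
  { apply Rmin_pos. lra. apply Rdiv_lt_0_compat; [apply cond_pos|lra]. }
  exists (mkposreal _ Hd). intros T HTb HT. apply ball_R.
  apply ball_R' in HTb. simpl in HTb. rewrite Rminus_0_r, Rabs_pos_eq in HTb by lra.
  assert (HT1 : T < 1) by (eapply Rlt_le_trans; [exact HTb|apply Rmin_l]).
  assert (HTe : T < eps / M) by (eapply Rlt_le_trans; [exact HTb|apply Rmin_r]).
  assert (Hy : 0 < k * T * exp (a * T)) by (pose proof (exp_pos (a*T)); repeat apply Rmult_lt_0_compat; lra).
  destruct (W_spec _ Hy) as [Hw Hwe].
  set (w := LambertW _) in *.
  assert (Hw1 : 1 + w <= exp w) by apply exp_ineq1_le.
  assert (Hwy : w <= k * T * exp (a * T)) by nra.
  assert (HaT : a * T <= Rabs a).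
  { pose proof (Rle_abs a). destruct (Rle_dec 0 a); nra. }
  pose proof (exp_mono _ _ HaT) as Hexp.
  assert (Hw2 : w <= k * exp (Rabs a) * T).
  { apply Rle_trans with (k*T*exp(a*T)); [auto|]. replace (k * exp (Rabs a) * T) with ((k*T) * exp (Rabs a)) by ring. apply Rmult_le_compat_l; [nra|auto]. }
  assert (HTeps : M * T < eps).
  { apply Rmult_lt_compat_l with (r := M) in HTe; [|lra].
    replace (M * (eps / M)) with (pos eps) in HTe by (field; lra). lra. }
  rewrite Rminus_0_r. unfold M in HTeps.
  assert (Rabs (a*T) <= Rabs a * T) by (rewrite Rabs_mult, (Rabs_pos_eq T); lra).
  pose proof (Rabs_triang w (- (a*T))). rewrite Rabs_Ropp in H2.
  rewrite (Rabs_pos_eq w) in H2 by lra. unfold Rminus.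
  replace ((k * exp (Rabs a) + Rabs a + 1) * T) with (k * exp (Rabs a) * T + Rabs a * T + T) in HTeps by ring. lra.
Qed.


Lemma v_bound k a T : 0 < k -> 0 < a -> 0 < T ->
  0 < LambertW (k*T*exp(a*T)) /\
  Rabs (LambertW (k*T*exp(a*T)) - a*T) <= k/a + a/k + 1.
Proof.
  intros Hk Ha HT.
  assert (Hy : 0 < k * T * exp (a * T)) by (pose proof (exp_pos (a*T)); repeat apply Rmult_lt_0_compat; lra).
  destruct (W_spec _ Hy) as [Hw Hwe].
  set (w := LambertW _) in *. split; [exact Hw|].
  set (v := w - a * T).
  assert (Hev : exp w = exp v * exp (a * T)) by (rewrite <- exp_plus; unfold v; f_equal; ring).
  pose proof (exp_pos (a*T)) as HA. pose proof (exp_pos v) as HV.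
  assert (Hrel : w * exp v = k * T).
  { apply Rmult_eq_reg_r with (exp (a*T)); [|lra]. rewrite Rmult_assoc, <- Hev. lra. }
  assert (Hka : 0 < k / a) by (apply Rdiv_lt_0_compat; lra).
  assert (Hak : 0 < a / k) by (apply Rdiv_lt_0_compat; lra).
  destruct (Rle_dec 0 v) as [Hv|Hv].
  - pose proof (exp_ineq1_le v).
    assert (HwaT : a * T <= w) by (unfold v in Hv; lra).
    assert (H1 : a * T * (1 + v) <= k * T).
    { rewrite <- Hrel. apply Rle_trans with (a * T * exp v).
      apply Rmult_le_compat_l; nra. apply Rmult_le_compat_r; lra. }
    assert (H2 : a * (1 + v) <= k) by nra.
    assert (H3 : v <= k / a - 1).
    { apply Rmult_le_reg_l with a; [lra|]. replace (a * (k/a - 1)) with (k - a) by (field; lra). lra. }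
    rewrite Rabs_pos_eq; lra.
  - pose proof (exp_ineq1_le (- v)).
    assert (Hinv : exp (- v) * exp v = 1) by (rewrite <- exp_plus; replace (-v+v) with 0 by ring; apply exp_0).
    assert (Hw2 : w = k * T * exp (- v)).
    { rewrite <- Hrel. rewrite Rmult_assoc, (Rmult_comm (exp v)), Hinv. ring. }
    assert (HwaT : w < a * T) by (unfold v in Hv; lra).
    assert (H2 : k * exp (- v) < a) by nra.
    assert (H3 : exp (- v) < a / k).
    { apply Rmult_lt_reg_l with k; [lra|]. replace (k * (a/k)) with a by (field; lra). lra. }
    rewrite Rabs_left; lra.
Qed.

Lemma part2 (c eta k a : R) : 0 < eta -> 0 < k -> 0 < a ->
  is_lim (fun T => eta * T / LambertW (k*T*exp(a*T)) * c) p_infty (c * (eta / a)).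
Proof.
  intros He Hk Ha. apply is_lim_spec. intros eps. simpl.
  set (C := k/a + a/k + 1).
  assert (HC : 0 < C) by (unfold C; pose proof (Rdiv_lt_0_compat k a Hk Ha); pose proof (Rdiv_lt_0_compat a k Ha Hk); lra).
  set (B := (Rabs c * eta + 1) * C).
  pose proof (Rabs_pos c) as Hc.
  assert (HB : 0 < B) by (unfold B; apply Rmult_lt_0_compat; nra).
  pose proof (cond_pos eps) as Heps.
  set (M := (B / (a * eps) + C + 1) / a).
  assert (HBae : 0 < B / (a * eps)) by (apply Rdiv_lt_0_compat; nra).
  assert (HM : 0 < M) by (unfold M; apply Rdiv_lt_0_compat; lra).
  exists M. intros T HT.
  destruct (v_bound k a T Hk Ha ltac:(lra)) as [Hw Hv].
  set (w := LambertW _) in *. fold C in Hv.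
  assert (HaT : a * T > B / (a * eps) + C + 1).
  { unfold M in HT. apply Rmult_lt_compat_l with (r := a) in HT; [|lra].
    replace (a * ((B / (a * eps) + C + 1) / a)) with (B / (a * eps) + C + 1) in HT by (field; lra). lra. }
  assert (Hwl : w > B / (a * eps) + 1).
  { pose proof (Rle_abs (-(w - a*T))) as Hq. rewrite Rabs_Ropp in Hq. lra. }
  replace (eta * T / w * c - c * (eta / a)) with ((- (c * eta) * (w - a * T)) / (a * w)) by (field; lra).
  rewrite Rabs_div by nra. rewrite Rabs_mult, Rabs_Ropp, Rabs_mult, (Rabs_pos_eq eta), (Rabs_pos_eq (a * w)) by nra.
  assert (Hawe : a * w * eps > B).
  { assert (a * w > B / eps).
    { apply Rmult_gt_compat_l with (r := a) in Hwl; [|lra].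
      replace (a * (B / (a * eps) + 1)) with (B / eps + a) in Hwl by (field; lra). lra. }
    apply Rmult_gt_compat_r with (r := eps) in H; [|lra].
    replace (B / eps * eps) with B in H by (field; lra). lra. }
  assert (Hnum : Rabs c * eta * Rabs (w - a * T) < eps * (a * w)).
  { apply Rle_lt_trans with (Rabs c * eta * C).
    apply Rmult_le_compat_l; [nra|exact Hv].
    unfold B in Hawe. nra. }
  apply Rmult_lt_reg_r with (a * w); [nra|].
  unfold Rdiv. rewrite Rmult_assoc, Rinv_l by nra. lra.
Qed.

Theorem lemma3 (r nu mu eta sigma s0 lambda gamma : R)
  (Heta : 0 < eta) (Hsigma : 0 < sigma) (Hs0 : 0 < s0)
  (Hlambda : 0 < lambda) (Hgamma : 0 < gamma) :
  (exists eps : R -> R,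
      (forall T : R, 0 < T ->
         rho_star r nu mu eta sigma s0 lambda gamma T =
         (mu - r) / sigma *
           (1 / (eta * s0 * lambda * gamma)
            + (eta - (nu - eta ^ 2 / 2) / (eta * s0 * lambda * gamma)) * T)
         + T * eps T)
      /\ filterlim eps (at_right 0) (locally 0))
  /\
  (eta ^ 2 / 2 < nu ->
     is_lim (rho_star r nu mu eta sigma s0 lambda gamma) p_infty
       ((mu - r) / sigma * (eta / (nu - eta ^ 2 / 2)))).
Proof.
  assert (Hk : 0 < lambda * gamma * s0 * eta ^ 2)
    by (repeat apply Rmult_lt_0_compat; try apply pow_lt; lra).
  split.
  - set (main := fun T => (mu - r) / sigma *
           (1 / (eta * s0 * lambda * gamma)
            + (eta - (nu - eta ^ 2 / 2) / (eta * s0 * lambda * gamma)) * T)).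
    exists (fun T => (rho_star r nu mu eta sigma s0 lambda gamma T - main T) / T).
    split.
    + intros T HT. fold (main T). field. lra.
    + set (k := lambda * gamma * s0 * eta ^ 2) in *.
      set (a := nu - eta ^ 2 / 2).
      set (c0 := (mu - r) / sigma / (eta * s0 * lambda * gamma)).
      apply filterlim_ext_loc with (f := fun T => Ffun c0 k a (LambertW (k*T*exp(a*T)) - a*T)).
      * exists (mkposreal 1 Rlt_0_1). intros T _ HT. simpl in HT.
        destruct (W_spec (k*T*exp(a*T))) as [Hw Hwe].
        { pose proof (exp_pos (a*T)); repeat apply Rmult_lt_0_compat; lra. }
        unfold c0, k, a, main, rho_star. symmetry. apply key_id; try lra; assumption.
      * eapply filterlim_comp. apply u_lim; exact Hk.
        pose proof (Ffun_cont c0 k a) as Hc. unfold continuous in Hc.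
        rewrite Ffun_0 in Hc. exact Hc.
  - intros Hnu. unfold rho_star.
    apply (part2 ((mu - r) / sigma) eta (lambda * gamma * s0 * eta ^ 2) (nu - eta ^ 2 / 2)); lra.
Qed.
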